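(* Let $K\ge2$, let $\mathbf{W}$ be a $K\times K$ invertible row-stochastic matrix, let $\mathbf{p}$ be a probability vector with all entries positive, and let $i\ne j$ in $[K]$. Let $\boldsymbol{\Pi}_{\{i,j\}}$ be the permutation matrix that swaps the $i$-th and $j$-th entries. Then the function $$[0,1]\to\mathbb{R}_+,\qquad \lambda\mapsto\alpha_{f\text{-DIV}}\big(\lambda\mathbf{p}+(1-\lambda)\mathbf{p}\boldsymbol{\Pi}_{\{i,j\}},\mathbf{W}\big)$$ is convex.
   Context: $\boldsymbol{\Phi}(\mathbf{W})=\mathbf{W}(\mathbf{W}^{-1}\odot\mathbf{W}^{-1})$ with $\odot$ the entrywise product. For a probability vector $\mathbf{p}$ with positive entries, $\alpha_{f\text{-DIV}}(\mathbf{p},\mathbf{W})=\frac{\mathbf{p}\boldsymbol{\Phi}(\mathbf{W})\mathbf{p}^{-\top}-1}{K-1}=\frac{1}{K-1}\Big(\sum_{k,\ell}\frac{p_k}{p_\ell}\Phi_{k,\ell}(\mathbf{W})-1\Big)$, where $\mathbf{p}^{-\top}$ is the column vector of entrywise reciprocals of $\mathbf{p}$ (this is the paper's closed form for the limiting normalized $f$-divergence loss). *)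

(* Defs.v *)
From mathcomp Require Import all_boot all_order all_algebra all_fingroup.
Set Implicit Arguments. Unset Strict Implicit. Unset Printing Implicit Defensive.
Import Order.TTheory GRing.Theory Num.Theory.
Local Open Scope ring_scope.

Definition Phi (R : fieldType) (K : nat) (W : 'M[R]_K) : 'M[R]_K :=
  W *m map2_mx (fun a b => a * b) (invmx W) (invmx W).

Definition alpha_fdiv (R : fieldType) (K : nat) (p : 'rV[R]_K) (W : 'M[R]_K) : R :=
  ((\sum_(k < K) \sum_(l < K) p 0 k / p 0 l * Phi W k l) - 1) / (K%:R - 1).

Definition row_stochastic (R : numDomainType) (K : nat) (W : 'M[R]_K) : Prop :=
  (forall k l, 0 <= W k l) /\ (forall k, \sum_(l < K) W k l = 1).

Definition prob_vec_pos (R : numDomainType) (K : nat) (p : 'rV[R]_K) : Prop :=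
  (forall k, 0 < p 0 k) /\ \sum_(k < K) p 0 k = 1.

Definition convex_on_01 (R : realFieldType) (f : R -> R) : Prop :=
  forall x y t : R, 0 <= x <= 1 -> 0 <= y <= 1 -> 0 <= t <= 1 ->
    f (t * x + (1 - t) * y) <= t * f x + (1 - t) * f y.

(* Main.v *)
Require Import Defs.
From mathcomp Require Import all_boot all_order all_algebra all_fingroup.
From mathcomp Require Import ring lra.
Import Order.TTheory GRing.Theory Num.Theory.
Local Open Scope ring_scope.

Lemma core_ineq (R : realFieldType) (ax ay bx by' t : R) :
  0 <= t <= 1 -> 0 < bx -> 0 < by' -> 0 <= (by' - bx) * (ax * by' - ay * bx) ->
  (t * ax + (1 - t) * ay) / (t * bx + (1 - t) * by') <=
  t * (ax / bx) + (1 - t) * (ay / by').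
Proof.
move=> /andP[t0 t1] bx0 by0 H.
have m0 : 0 < t * bx + (1 - t) * by'.
  case: (ltrP 0 t) => tp.
    have h1 : 0 < t * bx by apply: mulr_gt0.
    have h2 : 0 <= (1 - t) * by' by apply: mulr_ge0; lra.
    lra.
  have -> : t = 0 by lra.
  by rewrite mul0r add0r subr0 mul1r.
rewrite -subr_ge0.
have -> : t * (ax / bx) + (1 - t) * (ay / by') -
   (t * ax + (1 - t) * ay) / (t * bx + (1 - t) * by') =
   (t * (1 - t)) * ((by' - bx) * (ax * by' - ay * bx)) /
     (bx * by' * (t * bx + (1 - t) * by')).
  by field; rewrite ?gt_eqF ?mulr_gt0.
apply: divr_ge0; last by apply/ltW; rewrite !mulr_gt0.
by apply: mulr_ge0 => //; apply: mulr_ge0; lra.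
Qed.

Lemma cond_lemma (R : realFieldType) (ax ay bx by' : R) :
  (bx = by') \/ (ax = ay /\ 0 <= ax) \/ (ax + bx = ay + by' /\ 0 <= ax + bx)
  \/ (ax = bx /\ ay = by') -> 0 <= (by' - bx) * (ax * by' - ay * bx).
Proof.
case=> [->|[[<- a0]|[[e s0]|[-> ->]]]].
- by rewrite subrr mul0r.
- have -> : (by' - bx) * (ax * by' - ax * bx) = ax * (by' - bx) ^+ 2 by ring.
  by apply: mulr_ge0 => //; apply: sqr_ge0.
- have -> : ay = ax + bx - by' by rewrite e; ring.
  have -> : (by' - bx) * (ax * by' - (ax + bx - by') * bx)
     = (ax + bx) * (by' - bx) ^+ 2 by ring.
  by apply: mulr_ge0 => //; apply: sqr_ge0.
- have -> : (by' - bx) * (bx * by' - by' * bx) = 0 by ring.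
  by [].
Qed.

Lemma Phi_ge0 (R : realFieldType) (K : nat) (W : 'M[R]_K) k l :
  row_stochastic W -> 0 <= Phi W k l.
Proof.
case=> Wge _; rewrite /Phi mxE; apply: sumr_ge0 => m _.
rewrite mxE; apply: mulr_ge0 => //.
by rewrite -expr2 sqr_ge0.
Qed.

Theorem lemma11 (R : realFieldType) (K : nat) (hK : (2 <= K)%N)
  (W : 'M[R]_K) (p : 'rV[R]_K) (i j : 'I_K) :
  W \in unitmx -> row_stochastic W -> prob_vec_pos p -> i != j ->
  convex_on_01 (fun lam : R =>
    alpha_fdiv (lam *: p + (1 - lam) *: (p *m perm_mx (tperm i j))) W).
Proof.
move=> _ Wst [pp _] _ x y t hx hy ht.
set q := fun lam : R => lam *: p + (1 - lam) *: (p *m perm_mx (tperm i j)).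
have qE : forall lam k, q lam 0 k = lam * p 0 k + (1 - lam) * p 0 (tperm i j k).
  move=> lam k; rewrite /q; have -> : p *m perm_mx (tperm i j) = col_perm (tperm i j) p
    by rewrite col_permE tpermV.
  by rewrite !mxE.
have qpos : forall lam k, 0 <= lam <= 1 -> 0 < q lam 0 k.
  move=> lam k /andP[l0 l1]; rewrite qE.
  case: (ltrP 0 lam) => lp.
    have h1 : 0 < lam * p 0 k by apply: mulr_gt0.
    have h2 : 0 <= (1 - lam) * p 0 (tperm i j k) by apply: mulr_ge0; [lra | apply: ltW].
    lra.
  have -> : lam = 0 by lra.
  by rewrite mul0r add0r subr0 mul1r.
have hm : 0 <= t * x + (1 - t) * y <= 1.
  move: hx hy ht => /andP[? ?] /andP[? ?] /andP[? ?].
  apply/andP; split; first by apply: addr_ge0; apply: mulr_ge0; lra.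
  have : t * x <= t * 1 by apply: ler_wpM2l; lra.
  have : (1 - t) * y <= (1 - t) * 1 by apply: ler_wpM2l; lra.
  lra.
have qaff : forall k, q (t * x + (1 - t) * y) 0 k =
    t * q x 0 k + (1 - t) * q y 0 k by move=> k; rewrite !qE; ring.
set S := fun lam => \sum_(k < K) \sum_(l < K) q lam 0 k / q lam 0 l * Phi W k l.
have HS : S (t * x + (1 - t) * y) <= t * S x + (1 - t) * S y.
  rewrite /S !mulr_sumr -big_split /=; apply: ler_sum => k _.
  rewrite !mulr_sumr -big_split /=; apply: ler_sum => l _.
  have E : forall u v w : R, t * (u * w) + (1 - t) * (v * w) = (t * u + (1 - t) * v) * w
    by move=> *; ring.
  rewrite !qaff E.
  apply: ler_wpM2r; first exact: Phi_ge0.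
  apply: core_ineq => //; try exact: qpos.
  apply: cond_lemma.
  have p1 := ltW (qpos _ _ hx).
  case: (tpermP i j l) => [el|el|nli nlj].
  - case: (tpermP i j k) => [ek|ek|nki nkj].
    + by right; right; right; rewrite ek el.
    + right; right; left; split; last by apply: addr_ge0.
      by rewrite !qE ek el tpermL tpermR; ring.
    + right; left; split; last by [].
      have tk : tperm i j k = k.
        by apply: tpermD; apply/eqP => H; [apply: nki | apply: nkj]; rewrite H.
      by rewrite !qE tk; ring.
  - case: (tpermP i j k) => [ek|ek|nki nkj].
    + right; right; left; split; last by apply: addr_ge0.
      by rewrite !qE ek el tpermL tpermR; ring.
    + by right; right; right; rewrite ek el.
    + right; left; split; last by [].
      have tk : tperm i j k = k.
        by apply: tpermD; apply/eqP => H; [apply: nki | apply: nkj]; rewrite H.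
      by rewrite !qE tk; ring.
  - have tl : tperm i j l = l.
      by apply: tpermD; apply/eqP => H; [apply: nli | apply: nlj]; rewrite H.
    by left; rewrite !qE tl; ring.
rewrite /alpha_fdiv -/(S _) -/(S x) -/(S y).
have E : forall u v w : R, t * ((u - 1) * w) + (1 - t) * ((v - 1) * w) = (t * u + (1 - t) * v - 1) * w
    by move=> *; ring.
rewrite E; apply: ler_wpM2r.
  rewrite invr_ge0 subr_ge0 ler1n; exact: ltnW.
lra.
Qed.
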